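(* For all integers $\mu_1,\mu_2\ge0$ and $i,j,k,m\ge0$: if $\omega_i+\omega_j+\omega_k-\omega_m=0$, or $\omega_i+\omega_j-\omega_k+\omega_m=0$, or $\omega_i-\omega_j+\omega_k+\omega_m=0$, or $-\omega_i+\omega_j+\omega_k+\omega_m=0$ (with $\omega_n=\omega_n^{(\mu_1,\mu_2)}$), then $\mathsf{C}^{(\mu_1,\mu_2)}_{ijkm}=0$.
   Context: $\omega_n^{(\mu_1,\mu_2)}=2n+1+\mu_1+\mu_2$. $\mathsf{e}_n(x)=\mathsf{N}_n(1-\cos2x)^{\mu_1/2}(1+\cos2x)^{\mu_2/2}P_n^{(\mu_1,\mu_2)}(\cos2x)$ with $P_n^{(\mu_1,\mu_2)}$ Jacobi polynomials and $\mathsf{N}_n=\sqrt{\frac{\omega_n}{2^{\mu_1+\mu_2}}\frac{\Gamma(n+1)\Gamma(n+\mu_1+\mu_2+1)}{\Gamma(n+\mu_1+1)\Gamma(n+\mu_2+1)}}$; $\mathsf{C}^{(\mu_1,\mu_2)}_{ijkm}=\int_0^{\pi/2}\mathsf{e}_i\mathsf{e}_j\mathsf{e}_k\mathsf{e}_m\sin(2x)\,dx$. *)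

(* Defs.v *)
From Stdlib Require Import Reals Arith Factorial.
From Coquelicot Require Import Coquelicot.
Open Scope R_scope.

Definition omega (mu1 mu2 n : nat) : R := INR (2 * n + 1 + mu1 + mu2).

Definition jacobiP (a b n : nat) (z : R) : R :=
  sum_f_R0 (fun s => Binomial.C (n + a) (n - s) * Binomial.C (n + b) s
                     * ((z - 1) / 2) ^ s * ((z + 1) / 2) ^ (n - s)) n.

(* Gamma(m+1) = m! for natural m *)
Definition normN (mu1 mu2 n : nat) : R :=
  sqrt (omega mu1 mu2 n / 2 ^ (mu1 + mu2)
        * (INR (fact n) * INR (fact (n + mu1 + mu2)))
        / (INR (fact (n + mu1)) * INR (fact (n + mu2)))).

(* e_n(x) = N_n (1 - cos 2x)^{mu1/2} (1 + cos 2x)^{mu2/2} P_n(cos 2x);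
   for the nonnegative bases, t^{mu/2} = (sqrt t)^mu. *)
Definition eJ (mu1 mu2 n : nat) (x : R) : R :=
  normN mu1 mu2 n * sqrt (1 - cos (2 * x)) ^ mu1 * sqrt (1 + cos (2 * x)) ^ mu2
  * jacobiP mu1 mu2 n (cos (2 * x)).

Definition Ccoef (mu1 mu2 i j k m : nat) : R :=
  RInt (fun x => eJ mu1 mu2 i x * eJ mu1 mu2 j x * eJ mu1 mu2 k x * eJ mu1 mu2 m x
                 * sin (2 * x)) 0 (PI / 2).

(* Main.v *)
Require Import Defs.
From Stdlib Require Import Reals Lra Lia Factorial.
From Coquelicot Require Import Coquelicot.
From mathcomp Require Import all_boot all_algebra.
From mathcomp Require Import zify.
From mathcomp Require Import Rstruct.
Set Implicit Arguments. Unset Strict Implicit. Unset Printing Implicit Defensive.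
Import GRing.Theory.

Local Open Scope ring_scope.
Section Alg.
Variable R : comNzRingType.
Implicit Types p q : {poly R}.

Lemma deriv_sum (I : Type) (r : seq I) (P : pred I) (F : I -> {poly R}) :
  (\sum_(i <- r | P i) F i)^`() = \sum_(i <- r | P i) (F i)^`().
Proof. exact: (big_morph _ (@derivD R) (@deriv0 R)). Qed.

Lemma leibniz p q n :
  (p * q)^`(n) = \sum_(t < n.+1) (p^`(t) * q^`(n - t)) *+ 'C(n, t).
Proof.
elim: n => [|n IH]; first by rewrite big_ord1 !derivn0 bin0 mulr1n.
rewrite derivnS IH deriv_sum.
set A := \sum_(i < n.+1) (p^`(i.+1) * q^`(n - i)) *+ 'C(n, i.+1).
set B := \sum_(i < n.+1) (p^`(i.+1) * q^`(n - i)) *+ 'C(n, i).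
set S2 := \sum_(i < n.+1) (p^`(i) * q^`((n - i).+1)) *+ 'C(n, i).
have E1 : \sum_(t < n.+1) ((p^`(t) * q^`(n - t)) *+ 'C(n, t))^`() = B + S2.
  rewrite /B /S2 -big_split /=; apply: eq_bigr => t _.
  by rewrite derivMn derivM -!derivnS mulrnDl.
have E2 : \sum_(t < n.+2) (p^`(t) * q^`(n.+1 - t)) *+ 'C(n.+1, t)
          = p * q^`(n.+1) + A + B.
  rewrite big_ord_recl /= bin0 mulr1n -addrA; congr (_ + _).
  rewrite /A /B -big_split /=; apply: eq_bigr => t _.
  by rewrite /bump /= add1n add0n -derivnS subSS binS mulrnDr.
have E3 : S2 = p * q^`(n.+1) + A.
  rewrite /S2 /A big_ord_recl /= subn0 bin0 mulr1n; congr (_ + _).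
  rewrite [RHS]big_ord_recr /= bin_small // mulr0n addr0.
  apply: eq_bigr => t _; rewrite /bump /= add1n add0n -!derivnS.
  by rewrite subnSK // ltn_ord.
by rewrite E1 E2 E3 addrC.
Qed.

Lemma derivn_XsubC_exp (c : R) N t :
  (('X - c%:P) ^+ N)^`(t) = ('X - c%:P) ^+ (N - t) *+ N ^_ t.
Proof.
elim: t => [|t IH]; first by rewrite derivn0 subn0 ffactn0 mulr1n.
rewrite derivnS IH derivMn deriv_exp derivXsubC mul1r ffactnSr.
by rewrite mulnC mulrnA subnS.
Qed.


Variables a b : nat.
Definition uP : {poly R} := 'X - 1%:P.
Definition vP : {poly R} := 'X - (-1)%:P.
Definition Fpoly m : {poly R} := uP ^+ (m + a) * vP ^+ (m + b).
Definition JP2 n : {poly R} :=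
  \sum_(s < n.+1) (uP ^+ s * vP ^+ (n - s)) *+ ('C(n + a, n - s) * 'C(n + b, s)).

Lemma Fderiv m k : (Fpoly m)^`(k) = \sum_(t < k.+1)
   ((uP ^+ (m + a - t) *+ (m + a) ^_ t) * (vP ^+ (m + b - (k - t)) *+ (m + b) ^_ (k - t))) *+ 'C(k, t).
Proof. by rewrite /Fpoly leibniz; apply: eq_bigr => t _; rewrite !derivn_XsubC_exp. Qed.

Lemma F_root1 m k : (k < m)%N -> ((Fpoly m)^`(k)).[1] = 0.
Proof.
move=> km; rewrite Fderiv horner_sum big1 // => t _.
rewrite hornerMn hornerM hornerMn horner_exp /uP hornerXsubC subrr expr0n.
have -> : (m + a - t == 0)%N = false by apply/negbTE; have := ltn_ord t; lia.
by rewrite mul0rn mul0r mul0rn.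
Qed.

Lemma F_rootm1 m k : (k < m)%N -> ((Fpoly m)^`(k)).[-1] = 0.
Proof.
move=> km; rewrite Fderiv horner_sum big1 // => t _.
rewrite hornerMn hornerM [X in _ * X]hornerMn horner_exp /vP hornerXsubC subrr expr0n.
have -> : (m + b - (k - t) == 0)%N = false by apply/negbTE; have := ltn_ord t; lia.
by rewrite mul0rn mulr0 mul0rn.
Qed.

Lemma rodrigues m : (Fpoly m)^`(m) = (uP ^+ a * vP ^+ b * JP2 m) *+ m`!.
Proof.
rewrite Fderiv /JP2 mulr_sumr -sumrMnl (reindex_inj rev_ord_inj) /=.
apply: eq_bigr => t _; rewrite subSS.
have tm : (t <= m)%N by have := ltn_ord t; lia.
have -> : (m + a - (m - t) = a + t)%N by lia.
have -> : (m - (m - t) = t)%N by lia.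
have -> : (m + b - t = b + (m - t))%N by lia.
rewrite !exprD -(bin_ffact (m + a)) -(bin_ffact (m + b)) -(bin_fact tm) bin_sub //.
rewrite !mulrnAl !mulrnAr -!mulrnA; congr (_ *+ _).
  by rewrite -!mulrA (mulrCA (uP ^+ t)).
move: (binomial (m + b) t) (binomial (m + a) (m - t)) (binomial m t) (t`!) ((m - t)`!) => x1 x2 x3 x4 x5; nia.
Qed.

Lemma size_mul_le2 (p q : {poly R}) dp dq :
  (size p <= dp.+1)%N -> (size q <= dq.+1)%N -> (size (p * q)%R <= (dp + dq).+1)%N.
Proof. move=> hp hq; apply: leq_trans (size_polyMleq _ _) _; lia. Qed.

Lemma size_JP2 n : (size (JP2 n) <= n.+1)%N.
Proof.
rewrite /JP2; apply: (big_ind (fun p : {poly R} => (size p <= n.+1)%N)).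
- by rewrite size_poly0.
- by move=> x y hx hy; apply: leq_trans (size_polyD x y) _; rewrite geq_max hx hy.
move=> s _; rewrite -scaler_nat; apply: leq_trans (size_scale_leq _ _) _.
have := ltn_ord s => hs.
apply: (@leq_trans (s + (n - s)).+1); last by lia.
by apply: size_mul_le2; rewrite /uP /vP size_exp_XsubC.
Qed.

Definition Qpoly i j k : {poly R} := uP ^+ a * vP ^+ b * JP2 i * JP2 j * JP2 k.

Lemma size_Qpoly i j k : (size (Qpoly i j k) <= (i + j + k + a + b).+1)%N.
Proof.
have -> : (i + j + k + a + b = a + b + i + j + k)%N by lia.
rewrite /Qpoly; repeat apply: size_mul_le2; rewrite ?size_JP2 //.
by rewrite /uP size_exp_XsubC.
by rewrite /vP size_exp_XsubC.
Qed.

Fixpoint anti (F Q : {poly R}) (n : nat) : {poly R} :=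
  match n with 0 => 0 | n'.+1 => F^`(n') * Q - anti F Q^`() n' end.

Lemma anti_deriv F n : forall Q,
  (anti F Q n)^`() = F^`(n) * Q - (-1) ^+ n * (F * Q^`(n)).
Proof.
elim: n => [|n IH] Q /=; first by rewrite deriv0 expr0 mul1r subrr.
rewrite derivB derivM IH -!derivnS -derivSn exprS mulN1r mulNr opprK opprB.
by rewrite -addrA; congr (_ + _); rewrite addrC subrK.
Qed.

Lemma anti_root F Q n x : (forall k, (k < n)%N -> (F^`(k)).[x] = 0) ->
  (anti F Q n).[x] = 0.
Proof.
elim: n Q => [|n IH] Q H /=; first by rewrite horner0.
rewrite hornerD hornerN IH; last by move=> k kn; apply: H; lia.
by rewrite hornerM H // mul0r subr0.
Qed.

End Alg.

Close Scope ring_scope.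
Open Scope R_scope.

Lemma fact_eq n : fact n = n`!.
Proof. elim: n => [|n IH] //=. by rewrite factS IH. Qed.

Lemma sum_f_R0_big f n : sum_f_R0 f n = (\sum_(i < n.+1) f i)%R.
Proof.
elim: n => [|n IH]; first by rewrite big_ord1.
by rewrite big_ord_recr /= IH.
Qed.

Lemma binC_INR N K : (K <= N)%nat -> Binomial.C N K = INR 'C(N, K).
Proof.
move=> KN; rewrite /Binomial.C.
have H := bin_fact KN.
have E : INR (fact N) = INR 'C(N, K) * (INR (fact K) * INR (fact (N - K))).
  by rewrite fact_eq -H -!multE !mult_INR -!fact_eq.
have -> : (N - K)%coq_nat = (N - K)%N by [].
rewrite E; field; split; apply: INR_fact_neq_0.
Qed.

Lemma JP2_aux (x y y' c1 c2 : R) (s k : nat) : y = y' ->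
  x ^ s * y ^ k * (c1 * c2) =
  2 ^ s * 2 ^ k * (c1 * c2 * (x ^ s * / 2 ^ s) * (y' ^ k * / 2 ^ k)).
Proof.
move=> <-; have h1 := pow_nonzero 2 s; have h2 := pow_nonzero 2 k.
field; split; [apply: h2 | apply: h1]; lra.
Qed.

Lemma JP2_eval a b n (z : R) :
  (@JP2 R a b n).[z]%R = 2 ^ n * jacobiP a b n z.
Proof.
rewrite /jacobiP sum_f_R0_big /JP2 horner_sum RmultE mulr_sumr.
apply: eq_bigr => s _.
have hs : (s <= n)%N by have := ltn_ord s; lia.
rewrite hornerMn hornerM !horner_exp /uP /vP !hornerXsubC -mulr_natr natrM.
rewrite (binC_INR (N := (n + a)%N) (K := (n - s)%N)); last by lia.
rewrite (binC_INR (N := (n + b)%N) (K := s)); last by lia.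
rewrite -!INRE -!RpowE -!RmultE -!RminusE -!RoppE.
have -> : (n - s)%coq_nat = (n - s)%N by [].
set k := (n - s)%N.
have -> : 2 ^ n = 2 ^ s * 2 ^ k by rewrite -pow_add; congr pow; rewrite /k; lia.
unfold Rdiv; rewrite !Rpow_mult_distr !pow_inv -?R1E.
have h1 := pow_nonzero 2 s; have h2 := pow_nonzero 2 k.
apply: JP2_aux; lra.
Qed.

Ltac toR := match goal with |- ?A = ?B => change (@eq R A B) end.

Lemma is_derive_eq (f : R -> R) x l l' : is_derive f x l -> l = l' -> is_derive f x l'.
Proof. by move=> h <-. Qed.

Lemma horner_derive (p : {poly R}) y : is_derive (fun z => p.[z]%R) y (p^`()).[y]%R.
Proof.
elim/poly_ind: p => [|p c IH].
  rewrite deriv0 horner0; eapply is_derive_ext; last exact: (is_derive_const (0:R) y).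
  by move=> t; rewrite horner0.
have h := is_derive_plus _ _ _ _ _ (is_derive_mult _ _ _ _ _ IH (is_derive_id y) Rmult_comm) (is_derive_const c y).
eapply is_derive_ext; last first.
  apply: (is_derive_eq h).
  rewrite derivMXaddC hornerD hornerM hornerX.
  change (p^`().[y]%R * y + p.[y]%R * 1 + 0 = (p.[y] + p^`().[y] * y)%R).
  rewrite -RplusE -RmultE; ring.
by move=> t; rewrite hornerMXaddC.
Qed.

Lemma hcos_derive (p : {poly R}) x :
  is_derive (fun x => p.[cos (2 * x)]%R) x ((p^`()).[cos (2 * x)]%R * (- (2 * sin (2 * x)))).
Proof.
have hc : is_derive (fun x => cos (2 * x)) x (- (2 * sin (2 * x))).
  by auto_derive => //; ring.
have h := is_derive_comp (fun y => p.[y]%R) (fun x => cos (2 * x)) x _ _ (horner_derive p (cos (2 * x))) hc.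
apply: (is_derive_eq h); rewrite /scal /= /mult /=; ring.
Qed.

Lemma uP_eval (z : R) n : ((@uP R) ^+ n).[z]%R = (z - 1) ^ n.
Proof. by rewrite horner_exp /uP hornerXsubC -RpowE. Qed.

Lemma vP_eval (z : R) n : ((@vP R) ^+ n).[z]%R = (z + 1) ^ n.
Proof.
rewrite horner_exp /vP hornerXsubC -RpowE; congr pow.
by rewrite -RminusE -RoppE; rewrite /Rminus Ropp_involutive.
Qed.

Lemma rod_eval a b m (z : R) : (((@Fpoly R a b m)^`(m)).[z])%R =
  INR (fact m) * ((z - 1) ^ a * (z + 1) ^ b * (2 ^ m * jacobiP a b m z)).
Proof.
rewrite rodrigues hornerMn !hornerM uP_eval vP_eval JP2_eval -mulr_natr -INRE fact_eq.
rewrite -!RmultE; match goal with |- ?A = ?B => change (@eq R A B) end; ring.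
Qed.

Lemma Q_eval a b i j k (z : R) : ((@Qpoly R a b i j k).[z])%R =
  (z - 1) ^ a * (z + 1) ^ b * (2 ^ i * jacobiP a b i z) * (2 ^ j * jacobiP a b j z)
  * (2 ^ k * jacobiP a b k z).
Proof. by rewrite /Qpoly !hornerM uP_eval vP_eval !JP2_eval. Qed.

Lemma final_aux (Ni Nj Nk Nm X1 X2 T1 T2 Pi Pj Pk Pm S fm wi wj wk wm : R) :
  X1 * X1 * (X1 * X1) = T1 * T1 -> X2 * X2 * (X2 * X2) = T2 * T2 ->
  fm <> 0 -> wi <> 0 -> wj <> 0 -> wk <> 0 -> wm <> 0 ->
  Ni * X1 * X2 * Pi * (Nj * X1 * X2 * Pj) * (Nk * X1 * X2 * Pk) * (Nm * X1 * X2 * Pm) * S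
  = Ni * Nj * Nk * Nm / (fm * wm * wi * wj * wk) *
    (fm * (T1 * T2 * (wm * Pm)) * (T1 * T2 * (wi * Pi) * (wj * Pj) * (wk * Pk))) * S.
Proof.
move=> H1 H2 h1 h2 h3 h4 h5.
transitivity (Ni * Nj * Nk * Nm * (X1 * X1 * (X1 * X1)) * (X2 * X2 * (X2 * X2)) * Pi * Pj * Pk * Pm * S).
  ring.
rewrite H1 H2; field; repeat split; assumption.
Qed.

Lemma sqrt_pow4 (t : R) a : 0 <= t ->
  sqrt t ^ a * sqrt t ^ a * (sqrt t ^ a * sqrt t ^ a) = (t * t) ^ a.
Proof.
move=> ht; rewrite -!Rpow_mult_distr sqrt_sqrt //.
Qed.

Lemma main_case a b i j k m : m = (i + j + k + a + b).+1 -> Ccoef a b i j k m = 0.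
Proof.
move=> hm.
pose F := @Fpoly R a b m. pose Q := @Qpoly R a b i j k. pose A := anti F Q m.
have HA' : (A^`() = F^`(m) * Q)%R.
  rewrite /A anti_deriv (derivn_poly0 (p := Q)) ?mulr0 ?subr0 //.
  by rewrite hm; apply: size_Qpoly.
have HA1 : (A.[1] = 0)%R by apply: anti_root => kk hk; apply: F_root1.
have HAm1 : (A.[-1] = 0)%R by apply: anti_root => kk hk; apply: F_rootm1.
pose K := normN a b i * normN a b j * normN a b k * normN a b m /
          (INR (fact m) * 2 ^ m * 2 ^ i * 2 ^ j * 2 ^ k).
pose g := fun x => - (K / 2) * (A.[cos (2 * x)])%R.
pose dg := fun x => K * (A^`().[cos (2 * x)])%R * sin (2 * x).
have pt : forall x, eJ a b i x * eJ a b j x * eJ a b k x * eJ a b m x * sin (2 * x) = dg x.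
  move=> x; rewrite /dg HA' hornerM rod_eval Q_eval /eJ /K.
  have hc := COS_bound (2 * x).
  apply: final_aux.
  - rewrite sqrt_pow4; last lra.
    rewrite -Rpow_mult_distr; congr pow; ring.
  - rewrite sqrt_pow4; last lra.
    rewrite -Rpow_mult_distr; congr pow; ring.
  - exact: INR_fact_neq_0.
  1-4: by apply pow_nonzero; lra.
have hd : forall x, is_derive g x (dg x).
  move=> x; have h := is_derive_scal _ _ (- (K / 2)) _ (hcos_derive A x).
  apply: (is_derive_eq h); rewrite /dg; move: (A^`().[cos (2 * x)]%R) => u; move: (sin (2 * x)) => w; toR; field.
have hcont : forall x, continuous dg x.
  move=> x; rewrite /dg.
  apply: continuous_mult; [apply: continuous_mult|].
  - exact: continuous_const.
  - apply: ex_derive_continuous; eexists; exact: hcos_derive.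
  - apply: ex_derive_continuous; by auto_derive.
have HI := is_RInt_derive g dg 0 (PI / 2) (fun x _ => hd x) (fun x _ => hcont x).
rewrite /Ccoef (RInt_ext _ dg); last by move=> x _; apply: pt.
rewrite (is_RInt_unique _ _ _ _ HI) /g /minus /plus /opp /=.
have -> : 2 * (PI / 2) = PI by field.
rewrite Rmult_0_r cos_0 cos_PI HAm1 HA1 /Hierarchy.opp /=.
toR; clearbody K; field.
Qed.

Lemma omega_nat a b n : omega a b n = 2 * INR n + 1 + INR a + INR b.
Proof. rewrite /omega !plus_INR /=; ring. Qed.

Lemma nat_of_R (x y : nat) : INR x = INR y -> x = y.
Proof. exact: INR_eq. Qed.

Theorem lemma5p3 (mu1 mu2 i j k m : nat) :
  (omega mu1 mu2 i + omega mu1 mu2 j + omega mu1 mu2 k - omega mu1 mu2 m = 0 \/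
   omega mu1 mu2 i + omega mu1 mu2 j - omega mu1 mu2 k + omega mu1 mu2 m = 0 \/
   omega mu1 mu2 i - omega mu1 mu2 j + omega mu1 mu2 k + omega mu1 mu2 m = 0 \/
   - omega mu1 mu2 i + omega mu1 mu2 j + omega mu1 mu2 k + omega mu1 mu2 m = 0) ->
  Ccoef mu1 mu2 i j k m = 0.
Proof.
rewrite !omega_nat => H.
case: H => [H|[H|[H|H]]].
- apply: main_case; apply: nat_of_R; rewrite S_INR !plus_INR; lra.
- rewrite (_ : Ccoef mu1 mu2 i j k m = Ccoef mu1 mu2 i j m k);
    last by rewrite /Ccoef; apply: RInt_ext => x _; toR; ring.
  apply: main_case; apply: nat_of_R; rewrite S_INR !plus_INR; lra.
- rewrite (_ : Ccoef mu1 mu2 i j k m = Ccoef mu1 mu2 i k m j);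
    last by rewrite /Ccoef; apply: RInt_ext => x _; toR; ring.
  apply: main_case; apply: nat_of_R; rewrite S_INR !plus_INR; lra.
- rewrite (_ : Ccoef mu1 mu2 i j k m = Ccoef mu1 mu2 j k m i);
    last by rewrite /Ccoef; apply: RInt_ext => x _; toR; ring.
  apply: main_case; apply: nat_of_R; rewrite S_INR !plus_INR; lra.
Qed.
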